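(* Let $\Phi(n)$ be an $\mathrm{st}_{\mathbb N}$-prenex formula, possibly with arbitrary (not necessarily standard) parameters. Then (in SPOT) $$\exists^{\mathrm{st}} S\;\forall^{\mathrm{st}} n\;\big(n\in S \iff n\in\mathbb N\wedge \Phi(n)\big).$$
   Context: We work in the theory SPOT. Its language is the $\in$-language (membership together with the usual defined symbols of mathematics such as $\mathbb N,\mathbb R,<,+,\cdot$) enriched by a unary predicate $\mathrm{st}$ (''$x$ is standard''). An $\in$-formula is a formula not mentioning $\mathrm{st}$. $\forall^{\mathrm{st}}x$ and $\exists^{\mathrm{st}}x$ denote quantifiers restricted to standard sets. The axioms of SPOT are: ZF; Transfer: for every $\in$-formula $\varphi(x)$ all of whose parameters are standard, $\forall^{\mathrm{st}}x\,\varphi(x)\to\forall x\,\varphi(x)$; Nontriviality: $\exists \nu\in\mathbb N\,\forall^{\mathrm{st}}n\in\mathbb N\,(n\neq\nu)$; Standard Part: $\forall A\subseteq\mathbb N\,\exists^{\mathrm{st}}B\subseteq\mathbb N\,\forall^{\mathrm{st}}n\in\mathbb N\,(n\in B\iff n\in A)$. A real $x$ is limited if $|x|\le n$ for some standard $n\in\mathbb N$; $x\approx r$ means $|x-r|\le 1/n$ for all standard $n\ge 1$; $x$ is infinitesimal if $x\approx 0$ and $x\ne0$; for limited $x$, $\mathrm{sh}(x)$ denotes the unique standard real $r$ with $x\approx r$. Write $\forall^{\mathrm{st}}_{\mathbb N}u\,\dots$ for $\forall u\,(u\in\mathbb N\wedge\mathrm{st}(u)\to\dots)$ and $\exists^{\mathrm{st}}_{\mathbb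 N}u\,\dots$ for $\exists u\,(u\in\mathbb N\wedge\mathrm{st}(u)\wedge\dots)$. An $\mathrm{st}_{\mathbb N}$-prenex formula is a formula of the form $\mathsf Q^{\mathrm{st}}_{\mathbb N}u_1\cdots\mathsf Q^{\mathrm{st}}_{\mathbb N}u_s\,\psi(u_1,\dots,u_s,v_1,\dots,v_r)$ where $\psi$ is an $\in$-formula and each $\mathsf Q$ is $\forall$ or $\exists$. *)

(* Defs.v *)
(* Semantic formalization of SPOT: a structure (V, mem, st)
   satisfying the ZF axioms (separation/replacement as schemas over
   deep-embedded in-formulas), Transfer (schema), Nontriviality, Standard Part. *)
From Stdlib Require Import List PeanoNat.
Import ListNotations.

Inductive form : Type :=
| FMem : nat -> nat -> form
| FEq  : nat -> nat -> form
| FFalse : form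
| FImp : form -> form -> form
| FAnd : form -> form -> form
| FOr  : form -> form -> form
| FAll : nat -> form -> form
| FEx  : nat -> form -> form.

Fixpoint free (p : form) (k : nat) : Prop :=
  match p with
  | FMem i j | FEq i j => k = i \/ k = j
  | FFalse => False
  | FImp a b | FAnd a b | FOr a b => free a k \/ free b k
  | FAll i a | FEx i a => k <> i /\ free a k
  end.

Definition upd {V : Type} (e : nat -> V) (i : nat) (x : V) : nat -> V :=
  fun j => if Nat.eqb j i then x else e j.

Fixpoint sat {V : Type} (mem : V -> V -> Prop) (e : nat -> V) (p : form) : Prop :=
  match p with
  | FMem i j => mem (e i) (e j)
  | FEq i j => e i = e j
  | FFalse => False
  | FImp a b => sat mem e a -> sat mem e b
  | FAnd a b => sat mem e a /\ sat mem e b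
  | FOr a b => sat mem e a \/ sat mem e b
  | FAll i a => forall x, sat mem (upd e i x) a
  | FEx i a => exists x, sat mem (upd e i x) a
  end.

Definition is_empty {V} (mem : V -> V -> Prop) (z : V) := forall w, ~ mem w z.
Definition is_succ {V} (mem : V -> V -> Prop) (y s : V) :=
  forall w, mem w s <-> (mem w y \/ w = y).
Definition inductive {V} (mem : V -> V -> Prop) (a : V) :=
  (exists z, mem z a /\ is_empty mem z) /\
  (forall y, mem y a -> exists s, mem s a /\ is_succ mem y s).
Definition isNat {V} (mem : V -> V -> Prop) (x : V) :=
  forall a, inductive mem a -> mem x a.

Record SPOT : Type := {
  V :> Type;
  mem : V -> V -> Prop;
  st : V -> Prop;
  ax_ext : forall a b, (forall x, mem x a <-> mem x b) -> a = b;
  ax_found : forall a, (exists x, mem x a) ->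
             exists x, mem x a /\ ~ (exists z, mem z x /\ mem z a);
  ax_pair : forall a b, exists c, forall x, mem x c <-> (x = a \/ x = b);
  ax_union : forall a, exists u, forall x, mem x u <-> exists y, mem y a /\ mem x y;
  ax_power : forall a, exists p, forall x, mem x p <-> (forall z, mem z x -> mem z a);
  ax_inf : exists a, inductive mem a;
  ax_sep : forall (p : form) (i : nat) (e : nat -> V) (a : V),
           exists b, forall x, mem x b <-> (mem x a /\ sat mem (upd e i x) p);
  ax_repl : forall (p : form) (i j : nat) (e : nat -> V) (a : V), i <> j ->
           (forall x, mem x a -> exists y, sat mem (upd (upd e i x) j y) p /\
               forall y', sat mem (upd (upd e i x) j y') p -> y' = y) ->
           exists b, forall y, mem y b <->
             exists x, mem x a /\ sat mem (upd (upd e i x) j y) p;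
  ax_transfer : forall (p : form) (x : nat) (e : nat -> V),
           (forall y, y <> x -> free p y -> st (e y)) ->
           (forall a, st a -> sat mem (upd e x a) p) ->
           forall a, sat mem (upd e x a) p;
  ax_nontriv : exists nu, isNat mem nu /\
           forall n, isNat mem n -> st n -> n <> nu;
  ax_stpart : forall A, (forall x, mem x A -> isNat mem x) ->
           exists B, st B /\ (forall x, mem x B -> isNat mem x) /\
             forall n, isNat mem n -> st n -> (mem n B <-> mem n A)
}.

Inductive quant := QAll | QEx.

Fixpoint sat_prenex (M : SPOT) (qs : list (quant * nat)) (psi : form)
    (e : nat -> M) : Prop :=
  match qs with
  | [] => sat (mem M) e psi
  | (QAll, u) :: qs' => forall x : M, isNat (mem M) x -> st M x ->
                        sat_prenex M qs' psi (upd e u x)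
  | (QEx, u) :: qs' => exists x : M, isNat (mem M) x /\ st M x /\
                        sat_prenex M qs' psi (upd e u x)
  end.

(* Main.v *)
Require Import Defs.
From Stdlib Require Import List PeanoNat Lia Classical ClassicalEpsilon.
Import ListNotations.

Section Main.
Variable M : SPOT.
Notation mm := (mem M).
Notation stt := (st M).

Lemma upd_eq (e : nat -> M) i x : upd e i x i = x.
Proof. unfold upd; rewrite Nat.eqb_refl; auto. Qed.
Lemma upd_neq (e : nat -> M) i x j : j <> i -> upd e i x j = e j.
Proof. intro H; unfold upd; apply Nat.eqb_neq in H; rewrite H; auto. Qed.

Lemma sat_agree f : forall e1 e2 : nat -> M, (forall v, free f v -> e1 v = e2 v) ->
  (sat mm e1 f <-> sat mm e2 f).
Proof.
  induction f; intros e1 e2 H; simpl in *.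
  - rewrite (H n), (H n0) by auto; tauto.
  - rewrite (H n), (H n0) by auto; tauto.
  - tauto.
  - rewrite (IHf1 e1 e2), (IHf2 e1 e2) by auto; tauto.
  - rewrite (IHf1 e1 e2), (IHf2 e1 e2) by auto; tauto.
  - rewrite (IHf1 e1 e2), (IHf2 e1 e2) by auto; tauto.
  - split; intros Hx x.
    + rewrite <- (IHf (upd e1 n x)); auto. intros v Hv. destruct (Nat.eq_dec v n).
      * subst; rewrite !upd_eq; auto.
      * rewrite !upd_neq by auto; auto.
    + rewrite (IHf (upd e1 n x) (upd e2 n x)); auto. intros v Hv. destruct (Nat.eq_dec v n).
      * subst; rewrite !upd_eq; auto.
      * rewrite !upd_neq by auto; auto.
  - split; intros [x Hx]; exists x.
    + rewrite <- (IHf (upd e1 n x)); auto. intros v Hv. destruct (Nat.eq_dec v n).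
      * subst; rewrite !upd_eq; auto.
      * rewrite !upd_neq by auto; auto.
    + rewrite (IHf (upd e1 n x) (upd e2 n x)); auto. intros v Hv. destruct (Nat.eq_dec v n).
      * subst; rewrite !upd_eq; auto.
      * rewrite !upd_neq by auto; auto.
Qed.

Definition Def (L : list nat) (P : (nat -> M) -> Prop) :=
  exists f, (forall v, free f v -> In v L) /\ forall env, sat mm env f <-> P env.

Lemma Def_agree L P e1 e2 : Def L P -> (forall v, In v L -> e1 v = e2 v) -> (P e1 <-> P e2).
Proof.
  intros [f [Hf Hs]] H. rewrite <- !Hs. apply sat_agree. intros; apply H; auto.
Qed.

Lemma Def_ext L P Q : Def L P -> (forall env, P env <-> Q env) -> Def L Q.
Proof. intros [f [Hf Hs]] H. exists f; split; auto. intro; rewrite Hs; auto. Qed.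

Lemma Def_weak L L' P : Def L P -> incl L L' -> Def L' P.
Proof. intros [f [Hf Hs]] H. exists f; split; auto. Qed.

Lemma Def_mem L i j : In i L -> In j L -> Def L (fun env => mm (env i) (env j)).
Proof. intros; exists (FMem i j); split; simpl; [intros v [->| ->]; auto | tauto]. Qed.
Lemma Def_eq L i j : In i L -> In j L -> Def L (fun env => env i = env j).
Proof. intros; exists (FEq i j); split; simpl; [intros v [->| ->]; auto | tauto]. Qed.
Lemma Def_False L : Def L (fun _ => False).
Proof. exists FFalse; split; simpl; tauto. Qed.
Lemma Def_True L : Def L (fun _ => True).
Proof. exists (FImp FFalse FFalse); split; simpl; tauto. Qed.
Lemma Def_imp L P Q : Def L P -> Def L Q -> Def L (fun env => P env -> Q env).
Proof. intros [f [Hf Hs]] [g [Hg Hg']]. exists (FImp f g); split; simpl.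
  intros v [H|H]; auto. intro; rewrite Hs, Hg'; tauto. Qed.
Lemma Def_and L P Q : Def L P -> Def L Q -> Def L (fun env => P env /\ Q env).
Proof. intros [f [Hf Hs]] [g [Hg Hg']]. exists (FAnd f g); split; simpl.
  intros v [H|H]; auto. intro; rewrite Hs, Hg'; tauto. Qed.
Lemma Def_or L P Q : Def L P -> Def L Q -> Def L (fun env => P env \/ Q env).
Proof. intros [f [Hf Hs]] [g [Hg Hg']]. exists (FOr f g); split; simpl.
  intros v [H|H]; auto. intro; rewrite Hs, Hg'; tauto. Qed.
Lemma Def_not L P : Def L P -> Def L (fun env => ~ P env).
Proof. intros H. apply (Def_imp L P (fun _ => False) H (Def_False L)). Qed.
Lemma Def_iff L P Q : Def L P -> Def L Q -> Def L (fun env => P env <-> Q env).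
Proof. intros H1 H2. apply (Def_ext _ (fun env => (P env -> Q env) /\ (Q env -> P env))).
  apply (Def_and L (fun env => P env -> Q env) (fun env => Q env -> P env));
  apply Def_imp; auto. intro; cbv beta; tauto. Qed.

Lemma Def_all' L0 L i P Q : Def L0 P -> (forall v, In v L0 -> v = i \/ In v L) ->
  (forall env, Q env <-> forall x, P (upd env i x)) -> Def L Q.
Proof.
  intros [f [Hf Hs]] HL HQ. exists (FAll i f); split.
  - simpl; intros v [H1 H2]. destruct (HL v (Hf v H2)); [congruence|auto].
  - intro env; simpl. rewrite HQ. split; intros H x; apply Hs; auto; apply H.
Qed.
Lemma Def_ex' L0 L i P Q : Def L0 P -> (forall v, In v L0 -> v = i \/ In v L) ->
  (forall env, Q env <-> exists x, P (upd env i x)) -> Def L Q.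
Proof.
  intros [f [Hf Hs]] HL HQ. exists (FEx i f); split.
  - simpl; intros v [H1 H2]. destruct (HL v (Hf v H2)); [congruence|auto].
  - intro env; simpl. rewrite HQ. split; intros [x H]; exists x; apply Hs; auto.
Qed.

Lemma Def_all i L (B : (nat -> M) -> M -> Prop) :
  Def (i :: L) (fun env => B env (env i)) -> (forall env x, B (upd env i x) x <-> B env x) ->
  Def L (fun env => forall x, B env x).
Proof.
  intros H1 H2. apply (Def_all' _ _ i _ _ H1). simpl; intros v [H|H]; auto.
  intro env; cbv beta. split; intros H x.
  - rewrite upd_eq, H2. apply H.
  - specialize (H x). rewrite upd_eq, H2 in H. exact H.
Qed.
Lemma Def_ex i L (B : (nat -> M) -> M -> Prop) :
  Def (i :: L) (fun env => B env (env i)) -> (forall env x, B (upd env i x) x <-> B env x) ->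
  Def L (fun env => exists x, B env x).
Proof.
  intros H1 H2. apply (Def_ex' _ _ i _ _ H1). simpl; intros v [H|H]; auto.
  intro env; cbv beta. split; intros [x H]; exists x.
  - rewrite upd_eq, H2. exact H.
  - rewrite upd_eq, H2 in H. exact H.
Qed.

Definition fresh (L : list nat) := S (fold_right max 0 L).
Lemma fresh_notin L : ~ In (fresh L) L.
Proof.
  assert (forall v, In v L -> v <= fold_right max 0 L).
  { induction L; simpl; intros v H; [tauto|]. destruct H; subst; [lia|]. apply IHL in H; lia. }
  unfold fresh; intro H'; apply H in H'; lia.
Qed.
Lemma fresh_ex (L : list nat) : exists t, ~ In t L.
Proof. exists (fresh L); apply fresh_notin. Qed.

Definition DP1 (P : M -> Prop) := forall (L : list nat) (i : nat), In i L -> Def L (fun env => P (env i)).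
Definition DP2 (P : M -> M -> Prop) := forall (L : list nat) (i j : nat), In i L -> In j L ->
  Def L (fun env => P (env i) (env j)).
Definition DP3 (P : M -> M -> M -> Prop) := forall (L : list nat) (i j k : nat), In i L -> In j L -> In k L ->
  Def L (fun env => P (env i) (env j) (env k)).

Ltac fresh_neq := let E := fresh "E" in intro E; subst; simpl in *; tauto.
Ltac upd_simp := repeat match goal with
  | |- context [upd ?e ?i ?x ?i] => rewrite (upd_eq e i x)
  | |- context [upd ?e ?i ?x ?j] => rewrite (upd_neq e i x j) by fresh_neq
  end.
Ltac inL := simpl; tauto.

Ltac defauto :=
  match goal with
  | |- Def ?L (fun env => forall x : V M, @?B env x) =>
      let t := fresh "t" in let Ht := fresh "Ht" in
      destruct (fresh_ex L) as [t Ht];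
      apply (Def_all t L B); [cbv beta; defauto | intros; cbv beta; upd_simp; reflexivity]
  | |- Def ?L (fun env => exists x : V M, @?B env x) =>
      let t := fresh "t" in let Ht := fresh "Ht" in
      destruct (fresh_ex L) as [t Ht];
      apply (Def_ex t L B); [cbv beta; defauto | intros; cbv beta; upd_simp; reflexivity]
  | |- Def ?L (fun env => @?A env /\ @?B env) => apply (Def_and L A B); cbv beta; defauto
  | |- Def ?L (fun env => @?A env \/ @?B env) => apply (Def_or L A B); cbv beta; defauto
  | |- Def ?L (fun env => @?A env <-> @?B env) => apply (Def_iff L A B); cbv beta; defauto
  | |- Def ?L (fun env => ~ @?A env) => apply (Def_not L A); cbv beta; defauto
  | |- Def ?L (fun env => @?A env -> @?B env) => apply (Def_imp L A B); cbv beta; defauto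
  | |- Def ?L (fun env => False) => apply Def_False
  | |- Def ?L (fun env => True) => apply Def_True
  | |- Def ?L (fun env => mm (env ?i) (env ?j)) => apply Def_mem; inL
  | |- Def ?L (fun env => env ?i = env ?j) => apply Def_eq; inL
  | H : DP1 ?P |- Def ?L (fun env => ?P (env ?i)) => apply H; inL
  | H : DP2 ?P |- Def ?L (fun env => ?P (env ?i) (env ?j)) => apply H; inL
  | H : DP3 ?P |- Def ?L (fun env => ?P (env ?i) (env ?j) (env ?k)) => apply H; inL
  end.

Lemma DP_empty : DP1 (is_empty mm).
Proof. intros L i Hi. unfold is_empty. defauto. Qed.
Lemma DP_succ : DP2 (is_succ mm).
Proof. intros L i j Hi Hj. unfold is_succ. defauto. Qed.
Lemma DP_ind : DP1 (inductive mm).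
Proof. intros L i Hi. pose proof DP_empty. pose proof DP_succ. unfold inductive. defauto. Qed.
Lemma DP_nat : DP1 (isNat mm).
Proof. intros L i Hi. pose proof DP_ind. unfold isNat. defauto. Qed.


Lemma transfer_all L P x (e : nat -> M) : Def L P ->
  (forall y, In y L -> y <> x -> stt (e y)) ->
  (forall a, stt a -> P (upd e x a)) -> forall a, P (upd e x a).
Proof.
  intros [f [Hf Hs]] He H a. apply Hs. apply (ax_transfer M f x e).
  - intros y Hyx Hfy. apply He; auto.
  - intros b Hb. apply Hs. auto.
Qed.

Lemma transfer_ex L P x (e : nat -> M) : Def L P ->
  (forall y, In y L -> y <> x -> stt (e y)) ->
  (exists a, P (upd e x a)) -> exists a, stt a /\ P (upd e x a).
Proof.
  intros HD He [a Ha]. apply NNPP; intro Hn.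
  assert (H : forall a, (fun env => ~ P env) (upd e x a)).
  { apply (transfer_all L (fun env => ~ P env)); auto. apply Def_not; auto. intros b Hb HP. apply Hn; eauto. }
  apply (H a); auto.
Qed.

Lemma sep L P (e : nat -> M) i a : Def L P -> exists b, forall x, mm x b <-> mm x a /\ P (upd e i x).
Proof.
  intros [f [Hf Hs]]. destruct (ax_sep M f i e a) as [b Hb]. exists b. intro x. rewrite Hb, Hs. tauto.
Qed.

Lemma ext (a b : M) : (forall x, mm x a <-> mm x b) -> a = b.
Proof. apply ax_ext. Qed.

Lemma ex_zero : exists z : M, is_empty mm z.
Proof. destruct (ax_inf M) as [a [[z [_ Hz]] _]]. eauto. Qed.

Lemma ex_pair (a b : M) : exists c, forall x, mm x c <-> x = a \/ x = b.
Proof. apply ax_pair. Qed.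

Lemma ex_succ (y : M) : exists s, is_succ mm y s.
Proof.
  destruct (ex_pair y y) as [s1 Hs1]. destruct (ex_pair y s1) as [c Hc].
  destruct (ax_union M c) as [u Hu]. exists u. intro w. rewrite Hu. split.
  - intros [z [Hz Hwz]]. apply Hc in Hz. destruct Hz; subst; auto. apply Hs1 in Hwz. tauto.
  - intros [H|H].
    + exists y; split; auto. apply Hc; auto.
    + exists s1; split; [apply Hc; auto|]. apply Hs1; auto.
Qed.

Definition zero : M := proj1_sig (constructive_indefinite_description _ ex_zero).
Definition succ (y : M) : M := proj1_sig (constructive_indefinite_description _ (ex_succ y)).
Lemma zero_spec : is_empty mm zero.
Proof. unfold zero; destruct constructive_indefinite_description; auto. Qed.
Lemma succ_spec y : is_succ mm y (succ y).
Proof. unfold succ; destruct constructive_indefinite_description; auto. Qed.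
Lemma empty_zero z : is_empty mm z -> z = zero.
Proof. intro H; apply ext; intro x; split; intro Hx; [destruct (H x Hx)|destruct (zero_spec x Hx)]. Qed.
Lemma succ_uniq y s : is_succ mm y s -> s = succ y.
Proof. intro H; apply ext; intro x; rewrite (H x), (succ_spec y x); tauto. Qed.

Lemma nat_zero : isNat mm zero.
Proof. intros a [[z [Hz He]] _]. rewrite <- (empty_zero z He); auto. Qed.
Lemma nat_succ n : isNat mm n -> isNat mm (succ n).
Proof. intros Hn a Ha. destruct Ha as [H0 H1]. destruct (H1 n (Hn a (conj H0 H1))) as [s [Hs Hss]].
  rewrite <- (succ_uniq _ _ Hss); auto. Qed.

Lemma zero_neq_succ n : zero <> succ n.
Proof. intro H. apply (zero_spec n). rewrite H. apply succ_spec; auto. Qed.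

Lemma succ_inj a b : succ a = succ b -> a = b.
Proof.
  intro H. assert (Ha : mm a (succ b)) by (rewrite <- H; apply succ_spec; auto).
  assert (Hb : mm b (succ a)) by (rewrite H; apply succ_spec; auto).
  apply succ_spec in Ha. apply succ_spec in Hb.
  destruct Ha as [Ha|Ha]; auto. destruct Hb as [Hb|Hb]; auto.
  destruct (ex_pair a b) as [c Hc].
  destruct (ax_found M c) as [x [Hx Hn]]. { exists a; apply Hc; auto. }
  apply Hc in Hx. destruct Hx; subst x.
  - exfalso; apply Hn. exists b; split; auto. apply Hc; auto.
  - exfalso; apply Hn. exists a; split; auto. apply Hc; auto.
Qed.

Lemma nat_ind' (P : M -> Prop) : DP1 P -> P zero -> (forall n, isNat mm n -> P n -> P (succ n)) ->
  forall n, isNat mm n -> P n.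
Proof.
  intros HP H0 HS. destruct (ax_inf M) as [a Ha].
  assert (HD : Def [0] (fun env => isNat mm (env 0) /\ P (env 0))).
  { pose proof DP_nat. defauto. }
  destruct (sep _ _ (fun _ => a) 0 a HD) as [b Hb].
  assert (Hb' : forall x, mm x b <-> mm x a /\ isNat mm x /\ P x).
  { intro x; rewrite Hb. rewrite upd_eq. tauto. }
  intros n Hn. assert (Hi : inductive mm b).
  { split.
    - exists zero; split; [|apply zero_spec]. apply Hb'. split; [apply nat_zero; auto|].
      split; [apply nat_zero|auto].
    - intros y Hy. apply Hb' in Hy. destruct Hy as [Hya [Hyn Hyp]]. exists (succ y). split; [|apply succ_spec].
      apply Hb'. split; [apply nat_succ; auto|]. split; [apply nat_succ; auto|auto]. }
  apply Hn in Hi. apply Hb' in Hi. tauto.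
Qed.

Lemma nat_cases n : isNat mm n -> n = zero \/ exists p, isNat mm p /\ n = succ p.
Proof.
  intro Hn. assert (H : is_empty mm n \/ exists p, isNat mm p /\ is_succ mm p n).
  { revert n Hn. apply nat_ind'.
    - intros L i Hi. pose proof DP_nat. pose proof DP_empty. pose proof DP_succ. defauto.
    - left; apply zero_spec.
    - intros n Hn _. right. exists n. split; auto. apply succ_spec. }
  destruct H as [H|[p [Hp Hs]]]; [left; apply empty_zero; auto|right; exists p; split; auto; apply succ_uniq; auto].
Qed.


Definition isPair (p a b : M) := forall w, mm w p <->
  ((forall t, mm t w <-> t = a) \/ (forall t, mm t w <-> t = a \/ t = b)).
Lemma DP_pair : DP3 isPair.
Proof. intros L i j k Hi Hj Hk. unfold isPair. defauto. Qed.

Lemma ex_kpair a b : exists p, isPair p a b.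
Proof.
  destruct (ex_pair a a) as [s1 H1]. destruct (ex_pair a b) as [s2 H2].
  destruct (ex_pair s1 s2) as [p Hp]. exists p. intro w. rewrite Hp. split.
  - intros [->| ->]; [left|right]; intro t; [rewrite H1|rewrite H2]; tauto.
  - intros [H|H]; [left|right]; apply ext; intro t; rewrite H; [rewrite H1|rewrite H2]; tauto.
Qed.

Lemma pair_inj p a b a' b' : isPair p a b -> isPair p a' b' -> a = a' /\ b = b'.
Proof.
  intros Hp Hq.
  destruct (ex_pair a a) as [w1 H1].
  assert (E1 : a' = a).
  { assert (Hw : mm w1 p) by (apply Hp; left; intro t; rewrite H1; tauto).
    apply Hq in Hw. destruct Hw as [Hw|Hw].
    - assert (mm a' w1) by (apply Hw; auto). apply H1 in H; tauto.
    - assert (mm a' w1) by (apply Hw; auto). apply H1 in H; tauto. }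
  subst a'. split; auto.
  destruct (ex_pair a b) as [w2 H2]. destruct (ex_pair a b') as [w3 H3].
  assert (Hb : b = a \/ b = b').
  { assert (Hw : mm w2 p) by (apply Hp; right; intro t; rewrite H2; tauto).
    apply Hq in Hw. assert (mm b w2) by (apply H2; auto).
    destruct Hw as [Hw|Hw]; apply Hw in H; tauto. }
  assert (Hb' : b' = a \/ b' = b).
  { assert (Hw : mm w3 p) by (apply Hq; right; intro t; rewrite H3; tauto).
    apply Hp in Hw. assert (mm b' w3) by (apply H3; auto).
    destruct Hw as [Hw|Hw]; apply Hw in H; tauto. }
  destruct Hb as [Hb|Hb]; auto. destruct Hb' as [Hb'|Hb']; congruence.
Qed.

Lemma ex_PP (Z : M) : exists X, forall p a b, mm a Z -> mm b Z -> isPair p a b -> mm p X.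
Proof.
  destruct (ax_power M Z) as [P1 H1]. destruct (ax_power M P1) as [P2 H2]. exists P2.
  intros p a b Ha Hb Hp. apply H2. intros w Hw. apply H1. intros z Hz.
  apply Hp in Hw. destruct Hw as [Hw|Hw]; apply Hw in Hz; destruct Hz; subst; auto; subst; auto.
Qed.

Lemma ex_omega : exists W, forall x, mm x W <-> isNat mm x.
Proof.
  destruct (ax_inf M) as [a Ha].
  assert (HD : Def [0] (fun env => isNat mm (env 0))) by (pose proof DP_nat; defauto).
  destruct (sep _ _ (fun _ => a) 0 a HD) as [b Hb]. exists b. intro x. rewrite Hb, upd_eq.
  split; [tauto|]. intro H; split; auto.
Qed.

Lemma ex_union2 (A B : M) : exists Y, forall x, mm x A \/ mm x B -> mm x Y.
Proof.
  destruct (ex_pair A B) as [c Hc]. destruct (ax_union M c) as [u Hu]. exists u.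
  intros x [H|H]; apply Hu; [exists A|exists B]; split; auto; apply Hc; auto.
Qed.

(* doubling relation as least fixed point *)
Definition PairIn (a b R : M) := exists p, isPair p a b /\ mm p R.
Lemma DP_PairIn : DP3 PairIn.
Proof. intros L i j k Hi Hj Hk. pose proof DP_pair. unfold PairIn. defauto. Qed.

Definition ClosedD (R : M) := (exists z, is_empty mm z /\ PairIn z z R) /\
  (forall a b a' b1 b', PairIn a b R -> is_succ mm a a' -> is_succ mm b b1 -> is_succ mm b1 b' -> PairIn a' b' R).
Lemma DP_ClosedD : DP1 ClosedD.
Proof. intros L i Hi. pose proof DP_PairIn. pose proof DP_empty. pose proof DP_succ.
  unfold ClosedD. defauto. Qed.

Definition Dr (n m : M) := forall R, ClosedD R -> PairIn n m R.
Lemma DP_Dr : DP2 Dr.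
Proof. intros L i j Hi Hj. pose proof DP_PairIn. pose proof DP_ClosedD. unfold Dr. defauto. Qed.

Lemma Dr_zero : Dr zero zero.
Proof. intros R [[z [Hz HR]] _]. rewrite <- (empty_zero z Hz). auto. Qed.
Lemma Dr_succ n m : Dr n m -> Dr (succ n) (succ (succ m)).
Proof. intros H R HR. pose proof (H R HR). destruct HR as [_ HR].
  apply (HR n m _ (succ m)); auto; apply succ_spec. Qed.

Lemma Dr_ind (Q : M -> M -> Prop) : DP2 Q -> Q zero zero ->
  (forall n m, isNat mm n -> isNat mm m -> Q n m -> Q (succ n) (succ (succ m))) ->
  forall n m, Dr n m -> isNat mm n /\ isNat mm m /\ Q n m.
Proof.
  intros HQ H0 HS. destruct ex_omega as [W HW]. destruct (ex_PP W) as [X HX].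
  assert (HD : Def [0] (fun env => exists a b, isNat mm a /\ isNat mm b /\ Q a b /\ isPair (env 0) a b)).
  { pose proof DP_nat; pose proof DP_pair. defauto. }
  destruct (sep _ _ (fun _ => X) 0 X HD) as [R HR].
  assert (HR' : forall p, mm p R <-> mm p X /\ exists a b, isNat mm a /\ isNat mm b /\ Q a b /\ isPair p a b).
  { intro p. rewrite HR, upd_eq. tauto. }
  assert (Hdec : forall a b, PairIn a b R -> isNat mm a /\ isNat mm b /\ Q a b).
  { intros a b [p [Hp HpR]]. apply HR' in HpR. destruct HpR as [_ [a0 [b0 [Ha [Hb [Hq Hp0]]]]]].
    destruct (pair_inj _ _ _ _ _ Hp Hp0); subst; auto. }
  assert (Hmk : forall a b, isNat mm a -> isNat mm b -> Q a b -> PairIn a b R).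
  { intros a b Ha Hb Hq. destruct (ex_kpair a b) as [p Hp]. exists p; split; auto.
    apply HR'. split; [apply (HX p a b); auto; apply HW; auto|]. exists a, b; auto. }
  intros n m Hnm. apply Hdec. apply Hnm. split.
  - exists zero; split; [apply zero_spec|]. apply Hmk; auto; apply nat_zero.
  - intros a b a' b1 b' Hab Ha' Hb1 Hb'. apply Hdec in Hab. destruct Hab as [Ha [Hb Hq]].
    rewrite (succ_uniq _ _ Ha'), (succ_uniq _ _ Hb'), (succ_uniq _ _ Hb1).
    apply Hmk; auto using nat_succ.
Qed.


Lemma Dr_nat n m : Dr n m -> isNat mm n /\ isNat mm m.
Proof.
  intro H. destruct (Dr_ind (fun _ _ => True)) with n m as [? [? _]]; auto.
  intros L i j _ _; apply Def_True.
Qed.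

Lemma Dr_inv n m : Dr n m -> (n = zero /\ m = zero) \/
  exists n0 m0, Dr n0 m0 /\ n = succ n0 /\ m = succ (succ m0).
Proof.
  intro H.
  destruct (Dr_ind (fun n m => Dr n m /\ ((is_empty mm n /\ is_empty mm m) \/
     exists n0 m0 m1, Dr n0 m0 /\ is_succ mm n0 n /\ is_succ mm m0 m1 /\ is_succ mm m1 m))) with n m
    as [_ [_ [_ [[H1 H2]|[n0 [m0 [m1 [H1 [H2 [H3 H4]]]]]]]]]]; auto.
  - intros L i j Hi Hj. pose proof DP_Dr; pose proof DP_empty; pose proof DP_succ. defauto.
  - split; [apply Dr_zero|]. left; split; apply zero_spec.
  - intros n1 m1 _ _ [Hd _]. split; [apply Dr_succ; auto|]. right.
    exists n1, m1, (succ m1). split; auto. split; [apply succ_spec|]. split; apply succ_spec.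
  - left; split; apply empty_zero; auto.
  - right. exists n0, m0. split; auto. split; [apply succ_uniq; auto|].
    rewrite (succ_uniq _ _ H4), (succ_uniq _ _ H3). auto.
Qed.

Lemma Dr_inj z z' d : Dr z d -> Dr z' d -> z' = z.
Proof.
  intros H H'. revert z'  H'.
  destruct (Dr_ind (fun z d => forall z', Dr z' d -> z' = z)) with z d as [_ [_ HQ]]; auto.
  - intros L i j Hi Hj. pose proof DP_Dr. defauto.
  - intros z' Hz. apply Dr_inv in Hz. destruct Hz as [[? _]|[n0 [m0 [_ [_ E]]]]]; auto.
    exfalso; apply (zero_neq_succ _ E).
  - intros n m _ _ IH z' Hz. apply Dr_inv in Hz. destruct Hz as [[_ E]|[n0 [m0 [Hd [E1 E2]]]]].
    + exfalso; apply (zero_neq_succ _ (eq_sym E)).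
    + apply succ_inj, succ_inj in E2. subst. rewrite (IH n0); auto.
Qed.

Lemma Dr_par a d b d' : Dr a d -> Dr b d' -> d <> succ d'.
Proof.
  intros H Hb'.
  assert (HQ : forall b d' s, Dr b d' -> is_succ mm d' s -> ~ d = s).
  2:{ apply (HQ b d' (succ d')); auto. apply succ_spec. }
  destruct (Dr_ind (fun a d => forall b d' s, Dr b d' -> is_succ mm d' s -> ~ d = s)) with a d as [_ [_ HQ]].
  - intros L i j Hi Hj. pose proof DP_Dr; pose proof DP_succ. defauto.
  - intros b0 d0 s Hb Hs E. rewrite (succ_uniq _ _ Hs) in E. apply (zero_neq_succ _ E).
  - intros n m _ _ IH b0 d0 s Hb Hs E. rewrite (succ_uniq _ _ Hs) in E. apply succ_inj in E. subst d0.
    apply Dr_inv in Hb. destruct Hb as [[_ E]|[n0 [m0 [Hd [E1 E2]]]]].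
    + apply (zero_neq_succ _ (eq_sym E)).
    + apply succ_inj in E2. apply (IH n0 m0 (succ m0)); auto. apply succ_spec.
  - auto.
  - exact HQ.
Qed.

Lemma Dr_total z : isNat mm z -> exists d, Dr z d.
Proof.
  revert z. apply nat_ind'.
  - intros L i Hi. pose proof DP_Dr. defauto.
  - exists zero; apply Dr_zero.
  - intros n _ [d Hd]. exists (succ (succ d)); apply Dr_succ; auto.
Qed.

(* pairing relation *)
Definition TripIn (x y z R : M) := exists q, isPair q y z /\ PairIn x q R.
Definition DP4 (P : M -> M -> M -> M -> Prop) := forall (L : list nat) (i j k l : nat),
  In i L -> In j L -> In k L -> In l L -> Def L (fun env => P (env i) (env j) (env k) (env l)).
Lemma DP_TripIn : DP4 TripIn.
Proof. intros L i j k l Hi Hj Hk Hl. pose proof DP_pair; pose proof DP_PairIn. unfold TripIn. defauto. Qed.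

Definition ClosedP (R : M) := (exists z, is_empty mm z /\ TripIn z z z R) /\
  (forall x y z d x' d', TripIn x y z R -> Dr z d -> is_succ mm x x' -> is_succ mm d d' -> TripIn x' y d' R) /\
  (forall x y z d y' d1 d2, TripIn x y z R -> Dr z d -> is_succ mm y y' -> is_succ mm d d1 ->
      is_succ mm d1 d2 -> TripIn x y' d2 R).
Lemma DP_ClosedP : DP1 ClosedP.
Proof. intros L i Hi. pose proof DP_TripIn; pose proof DP_empty; pose proof DP_succ; pose proof DP_Dr.
  unfold ClosedP.
  repeat match goal with
  | |- Def ?L (fun env => forall x : V M, @?B env x) =>
      let t := fresh "t" in let Ht := fresh "Ht" in
      destruct (fresh_ex L) as [t Ht];
      apply (Def_all t L B); [cbv beta | intros; cbv beta; upd_simp; reflexivity]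
  | |- Def ?L (fun env => exists x : V M, @?B env x) =>
      let t := fresh "t" in let Ht := fresh "Ht" in
      destruct (fresh_ex L) as [t Ht];
      apply (Def_ex t L B); [cbv beta | intros; cbv beta; upd_simp; reflexivity]
  | |- Def ?L (fun env => @?A env /\ @?B env) => apply (Def_and L A B); cbv beta
  | |- Def ?L (fun env => @?A env -> @?B env) => apply (Def_imp L A B); cbv beta
  | H : DP1 ?P |- Def ?L (fun env => ?P (env ?i)) => apply H; inL
  | H : DP2 ?P |- Def ?L (fun env => ?P (env ?i) (env ?j)) => apply H; inL
  | H : DP4 ?P |- Def ?L (fun env => ?P (env ?i) (env ?j) (env ?k) (env ?l)) => apply H; inL
  end.
Qed.


Definition Pir (x y z : M) := forall R, ClosedP R -> TripIn x y z R.
Lemma DP_Pir : DP3 Pir.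
Proof. intros L i j k Hi Hj Hk. pose proof DP_ClosedP. unfold Pir.
  destruct (fresh_ex L) as [t Ht].
  apply (Def_all t L (fun env R => ClosedP R -> TripIn (env i) (env j) (env k) R)).
  - cbv beta. apply Def_imp. apply H; inL. apply DP_TripIn; inL.
  - intros; cbv beta; upd_simp; reflexivity.
Qed.

Lemma Pir_zero : Pir zero zero zero.
Proof. intros R [[z [Hz HR]] _]. rewrite <- (empty_zero z Hz). auto. Qed.
Lemma Pir_sx x y z d : Pir x y z -> Dr z d -> Pir (succ x) y (succ d).
Proof. intros H Hd R HR. pose proof (H R HR). destruct HR as [_ [HR _]].
  apply (HR x y z d); auto; apply succ_spec. Qed.
Lemma Pir_sy x y z d : Pir x y z -> Dr z d -> Pir x (succ y) (succ (succ d)).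
Proof. intros H Hd R HR. pose proof (H R HR). destruct HR as [_ [_ HR]].
  apply (HR x y z d _ (succ d)); auto; apply succ_spec. Qed.

Lemma Pi_ind (Q : M -> M -> M -> Prop) : DP3 Q -> Q zero zero zero ->
  (forall x y z d, isNat mm x -> isNat mm y -> isNat mm z -> Q x y z -> Dr z d -> Q (succ x) y (succ d)) ->
  (forall x y z d, isNat mm x -> isNat mm y -> isNat mm z -> Q x y z -> Dr z d -> Q x (succ y) (succ (succ d))) ->
  forall x y z, Pir x y z -> isNat mm x /\ isNat mm y /\ isNat mm z /\ Q x y z.
Proof.
  intros HQ H0 HSx HSy. destruct ex_omega as [W HW]. destruct (ex_PP W) as [X2 HX2].
  destruct (ex_union2 W X2) as [Y HY]. destruct (ex_PP Y) as [X3 HX3].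
  assert (HD : Def [0] (fun env => exists x y z q, isNat mm x /\ isNat mm y /\ isNat mm z /\ Q x y z /\
     isPair q y z /\ isPair (env 0) x q)).
  { pose proof DP_nat; pose proof DP_pair. defauto. }
  destruct (sep _ _ (fun _ => X3) 0 X3 HD) as [R HR].
  assert (HR' : forall p, mm p R <-> mm p X3 /\ exists x y z q, isNat mm x /\ isNat mm y /\ isNat mm z /\
     Q x y z /\ isPair q y z /\ isPair p x q).
  { intro p. rewrite HR, upd_eq. tauto. }
  assert (Hdec : forall x y z, TripIn x y z R -> isNat mm x /\ isNat mm y /\ isNat mm z /\ Q x y z).
  { intros x y z [q [Hq [p [Hp HpR]]]]. apply HR' in HpR.
    destruct HpR as [_ [x0 [y0 [z0 [q0 [Hx [Hy [Hz [HQ0 [Hq0 Hp0]]]]]]]]]].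
    destruct (pair_inj _ _ _ _ _ Hp Hp0); subst.
    destruct (pair_inj _ _ _ _ _ Hq Hq0); subst; auto. }
  assert (Hmk : forall x y z, isNat mm x -> isNat mm y -> isNat mm z -> Q x y z -> TripIn x y z R).
  { intros x y z Hx Hy Hz Hq. destruct (ex_kpair y z) as [q Hq']. destruct (ex_kpair x q) as [p Hp].
    exists q; split; auto. exists p; split; auto.
    apply HR'. split.
    - apply (HX3 p x q); auto.
      + apply HY; left; apply HW; auto.
      + apply HY; right; apply (HX2 q y z); auto; apply HW; auto.
    - exists x, y, z, q. split; [|split; [|split; [|split; [|split]]]]; auto. }
  intros x y z Hxyz. apply Hdec. apply Hxyz. split; [|split].
  - exists zero; split; [apply zero_spec|]. apply Hmk; auto; apply nat_zero.
  - intros x0 y0 z0 d x' d' HT Hd Hx' Hd'. apply Hdec in HT. destruct HT as [Hx [Hy [Hz Hq]]].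
    rewrite (succ_uniq _ _ Hx'), (succ_uniq _ _ Hd').
    apply Hmk; auto using nat_succ. apply nat_succ, (Dr_nat _ _ Hd). apply (HSx x0 y0 z0 d); auto.
  - intros x0 y0 z0 d y' d1 d2 HT Hd Hy' Hd1 Hd2. apply Hdec in HT. destruct HT as [Hx [Hy [Hz Hq]]].
    rewrite (succ_uniq _ _ Hy'), (succ_uniq _ _ Hd2), (succ_uniq _ _ Hd1).
    apply Hmk; auto using nat_succ. apply nat_succ, nat_succ, (Dr_nat _ _ Hd). apply (HSy x0 y0 z0 d); auto.
Qed.

Lemma Pir_nat x y z : Pir x y z -> isNat mm x /\ isNat mm y /\ isNat mm z.
Proof.
  intro H. destruct (Pi_ind (fun _ _ _ => True)) with x y z as [? [? [? _]]]; auto.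
  intros L i j k _ _ _; apply Def_True.
Qed.

Lemma Pir_inv x y w : Pir x y w -> (x = zero /\ y = zero /\ w = zero) \/
  (exists x0 z d, x = succ x0 /\ Pir x0 y z /\ Dr z d /\ w = succ d) \/
  (exists y0 z d, y = succ y0 /\ Pir x y0 z /\ Dr z d /\ w = succ (succ d)).
Proof.
  intro H.
  destruct (Pi_ind (fun x y w => Pir x y w /\ ((is_empty mm x /\ is_empty mm y /\ is_empty mm w) \/
     (exists x0 z d, is_succ mm x0 x /\ Pir x0 y z /\ Dr z d /\ is_succ mm d w) \/
     (exists y0 z d d1, is_succ mm y0 y /\ Pir x y0 z /\ Dr z d /\ is_succ mm d d1 /\ is_succ mm d1 w))))
    with x y w as [_ [_ [_ [_ HH]]]]; auto.
  - intros L i j k Hi Hj Hk. pose proof DP_Pir; pose proof DP_Dr; pose proof DP_empty; pose proof DP_succ. defauto.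
  - split; [apply Pir_zero|]. left; split; [|split]; apply zero_spec.
  - intros x0 y0 z0 d _ _ _ [Hp _] Hd. split; [apply (Pir_sx _ _ z0); auto|]. right; left.
    exists x0, z0, d. split; [apply succ_spec|split; [auto|split; [auto|apply succ_spec]]].
  - intros x0 y0 z0 d _ _ _ [Hp _] Hd. split; [apply (Pir_sy _ _ z0); auto|]. right; right.
    exists y0, z0, d, (succ d).
    split; [apply succ_spec|split; [auto|split; [auto|split; apply succ_spec]]].
  - destruct HH as [[H1 [H2 H3]]|[[x0 [z [d [H1 [H2 [H3 H4]]]]]]|[y0 [z [d [d1 [H1 [H2 [H3 [H4 H5]]]]]]]]]].
    + left; split; [|split]; apply empty_zero; auto.
    + right; left. exists x0, z, d. split; [apply succ_uniq; auto|split; [auto|split; [auto|]]].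
      apply succ_uniq; auto.
    + right; right. exists y0, z, d. split; [apply succ_uniq; auto|split; [auto|split; [auto|]]].
      rewrite (succ_uniq _ _ H5), (succ_uniq _ _ H4); auto.
Qed.

Lemma Pir_inj x y z x' y' : Pir x y z -> Pir x' y' z -> x' = x /\ y' = y.
Proof.
  intros H H'. revert x' y' H'.
  destruct (Pi_ind (fun x y z => forall x' y', Pir x' y' z -> x' = x /\ y' = y)) with x y z as [_ [_ [_ HQ]]].
  - intros L i j k Hi Hj Hk. pose proof DP_Pir. defauto.
  - intros x' y' Hp. apply Pir_inv in Hp.
    destruct Hp as [[? [? _]]|[[x0 [z0 [d [_ [_ [_ E]]]]]]|[y0 [z0 [d [_ [_ [_ E]]]]]]]]; auto;
    exfalso; apply (zero_neq_succ _ E).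
  - intros x0 y0 z0 d _ _ _ IH Hd x' y' Hp. apply Pir_inv in Hp.
    destruct Hp as [[_ [_ E]]|[[x1 [z1 [d1 [E1 [Hp1 [Hd1 E]]]]]]|[y1 [z1 [d1 [E1 [Hp1 [Hd1 E]]]]]]]].
    + exfalso; apply (zero_neq_succ _ (eq_sym E)).
    + apply succ_inj in E. subst d1. pose proof (Dr_inj _ _ _ Hd Hd1). subst z1.
      destruct (IH _ _ Hp1). subst; auto.
    + apply succ_inj in E. exfalso. apply (Dr_par _ _ _ _ Hd Hd1 E).
  - intros x0 y0 z0 d _ _ _ IH Hd x' y' Hp. apply Pir_inv in Hp.
    destruct Hp as [[_ [_ E]]|[[x1 [z1 [d1 [E1 [Hp1 [Hd1 E]]]]]]|[y1 [z1 [d1 [E1 [Hp1 [Hd1 E]]]]]]]].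
    + exfalso; apply (zero_neq_succ _ (eq_sym E)).
    + apply succ_inj in E. exfalso. apply (Dr_par _ _ _ _ Hd1 Hd (eq_sym E)).
    + apply succ_inj, succ_inj in E. subst d1. pose proof (Dr_inj _ _ _ Hd Hd1). subst z1.
      destruct (IH _ _ Hp1). subst; auto.
  - auto.
  - exact HQ.
Qed.

Lemma Pir_total x y : isNat mm x -> isNat mm y -> exists z, Pir x y z.
Proof.
  assert (H0 : forall y, isNat mm y -> exists z w, is_empty mm w /\ Pir w y z).
  { apply nat_ind'.
    - intros L i Hi. pose proof DP_Pir; pose proof DP_empty. defauto.
    - exists zero, zero; split; [apply zero_spec|apply Pir_zero].
    - intros n _ [z [w [Hw Hp]]]. rewrite (empty_zero _ Hw) in Hp.
      destruct (Dr_total z) as [d Hd]. apply (Pir_nat _ _ _ Hp).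
      exists (succ (succ d)), zero. split; [apply zero_spec|]. apply (Pir_sy _ _ z); auto. }
  intros Hx. revert x Hx y. apply (nat_ind' (fun x => forall y, isNat mm y -> exists z, Pir x y z)).
  - intros L i Hi. pose proof DP_Pir; pose proof DP_nat. defauto.
  - intros y Hy. destruct (H0 y Hy) as [z [w [Hw Hp]]]. rewrite (empty_zero _ Hw) in Hp. eauto.
  - intros n _ IH y Hy. destruct (IH y Hy) as [z Hz]. destruct (Dr_total z) as [d Hd].
    apply (Pir_nat _ _ _ Hz). exists (succ d); apply (Pir_sx _ _ z); auto.
Qed.


Ltac usimpl H := cbv beta in H; unfold upd in H; simpl in H.
Ltac prm := let y := fresh "y" in let Hy := fresh "Hy" in let Hyx := fresh "Hyx" in
  intros y Hy Hyx; simpl in Hy;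
  repeat (destruct Hy as [<-|Hy]; [first [exfalso; apply Hyx; reflexivity | unfold upd; simpl; assumption] |]);
  contradiction.

Fixpoint envOf (e : nat -> M) (vs : list nat) (ns : list M) : nat -> M :=
  match vs, ns with
  | v :: vs', n :: ns' => upd (envOf e vs' ns') v n
  | _, _ => e
  end.

Lemma envOf_out e vs ns z : ~ In z vs -> envOf e vs ns z = e z.
Proof.
  revert ns; induction vs as [|v vs IH]; intros ns Hz; simpl; auto.
  destruct ns as [|n ns]; auto. simpl in Hz. rewrite upd_neq; [apply IH; tauto|]. intro; subst; tauto.
Qed.

Lemma envOf_agree e1 e2 vs ns z : (~ In z vs -> e1 z = e2 z) -> length ns = length vs ->
  envOf e1 vs ns z = envOf e2 vs ns z.
Proof.
  revert ns; induction vs as [|v vs IH]; intros ns Hz Hl; destruct ns as [|n ns]; simpl in *; try discriminate.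
  - auto.
  - destruct (Nat.eq_dec z v).
    + subst; rewrite !upd_eq; auto.
    + rewrite !upd_neq by auto. apply IH; auto. intro H; apply Hz; intros [E|E]; [congruence|tauto].
Qed.

Fixpoint Code (ns : list M) (m : M) : Prop :=
  match ns with
  | [] => False
  | a :: ns' => match ns' with
               | [] => m = a
               | _ :: _ => exists c, Code ns' c /\ Pir c a m
               end
  end.

Lemma Code_nat ns m : Code ns m -> Forall (isNat mm) ns -> isNat mm m.
Proof.
  destruct ns as [|a [|b ns]]; simpl.
  - tauto.
  - intros -> H; inversion H; auto.
  - intros [c [_ Hp]] _. apply (Pir_nat _ _ _ Hp).
Qed.

Lemma Code_inj ns : forall ns' m, length ns = length ns' -> Code ns m -> Code ns' m -> ns = ns'.
Proof.
  induction ns as [|a ns1 IH]; intros ns' m Hl H1 H2; [destruct H1|].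
  destruct ns' as [|a' ns1']; [discriminate|]. simpl in Hl; injection Hl as Hl.
  destruct ns1 as [|b ns2]; destruct ns1' as [|b' ns2']; try discriminate.
  - simpl in *. congruence.
  - destruct H1 as [c [Hc Hp]]. destruct H2 as [c' [Hc' Hp']].
    destruct (Pir_inj _ _ _ _ _ Hp Hp'). subst c' a'.
    rewrite (IH (b' :: ns2') c); auto.
Qed.

Lemma Code_ex_st ns : ns <> [] -> Forall (fun n => isNat mm n /\ stt n) ns -> exists m, stt m /\ Code ns m.
Proof.
  induction ns as [|a ns1 IH]; intros Hne Hf; [congruence|].
  inversion Hf as [|? ? [Han Hast] Hf1]; subst.
  destruct ns1 as [|b ns2].
  - exists a; simpl; auto.
  - destruct IH as [c [Hcs Hc]]; [congruence|auto|].
    assert (Hcn : isNat mm c) by (apply (Code_nat _ _ Hc); eapply Forall_impl; [|exact Hf1]; simpl; tauto).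
    destruct (Pir_total c a Hcn Han) as [m0 Hm0].
    assert (HD : Def [0;1;2] (fun env => Pir (env 0) (env 1) (env 2))) by (pose proof DP_Pir; defauto).
    destruct (transfer_ex _ _ 2 (upd (upd (fun _ => c) 0 c) 1 a) HD) as [m [Hms Hm]].
    + prm.
    + exists m0. unfold upd; simpl. auto.
    + usimpl Hm. exists m. split; auto. simpl. exists c; split; auto.
Qed.


Lemma DefBas vs : forall L K mv, vs <> [] -> Def L K -> ~ In mv vs ->
  exists L', Def L' (fun env => exists ns, length ns = length vs /\ Forall (isNat mm) ns /\
      Code ns (env mv) /\ K (envOf env vs ns)).
Proof.
  induction vs as [|u vs' IH]; intros L K mv Hne HK Hmv; [congruence|].
  assert (Hmu : mv <> u) by (intro; subst; apply Hmv; left; auto).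
  destruct vs' as [|u2 vs2].
  - exists (mv :: L).
    apply (Def_ex' (u :: mv :: L) (mv :: L) u (fun env => (isNat mm (env u) /\ env u = env mv) /\ K env)).
    + apply Def_and. apply Def_and. apply DP_nat; inL. apply Def_eq; inL.
      apply (Def_weak L); auto. intros v Hv; simpl; auto.
    + intros v [H|H]; auto.
    + intro env. split.
      * intros [ns [Hl [Hf [Hc Hk]]]]. destruct ns as [|n [|n1 ns1]]; simpl in Hl; try discriminate. simpl in Hc, Hk.
        inversion Hf; subst. exists (env mv). rewrite upd_eq, (upd_neq env u _ mv) by auto. auto.
      * intros [x Hx]. rewrite upd_eq, (upd_neq env u _ mv) in Hx by auto.
        destruct Hx as [[Hx E] Hk]. subst x. exists [env mv]. simpl. auto.
  - set (vs' := u2 :: vs2) in *.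
    destruct (fresh_ex (mv :: u :: vs' ++ L)) as [w Hw].
    destruct (fresh_ex (w :: mv :: u :: vs' ++ L)) as [cv Hcv].
    assert (HwL : ~ In w L) by (intro H; apply Hw; right; right; apply in_or_app; right; exact H).
    assert (Hwv : ~ In w vs') by (intro H; apply Hw; right; right; apply in_or_app; left; exact H).
    assert (Hwu : w <> u) by (intro E; apply Hw; right; left; auto).
    assert (Hwm : w <> mv) by (intro E; apply Hw; left; auto).
    assert (HcL : ~ In cv L) by (intro H; apply Hcv; right; right; right; apply in_or_app; right; exact H).
    assert (Hcvv : ~ In cv vs') by (intro H; apply Hcv; right; right; right; apply in_or_app; left; exact H).
    assert (Hcw : cv <> w) by (intro E; apply Hcv; left; auto).
    assert (Hcm : cv <> mv) by (intro E; apply Hcv; right; left; auto).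
    assert (HK2 : Def (w :: L) (fun env => K (upd env u (env w)))).
    { apply (Def_ex' (u :: w :: L) (w :: L) u (fun env => env u = env w /\ K env)).
      - apply Def_and. apply Def_eq; inL. apply (Def_weak L); auto. intros v Hv; simpl; auto.
      - intros v [H|H]; auto.
      - intro env. split.
        + intro H. exists (env w). rewrite upd_eq, upd_neq by auto. auto.
        + intros [x Hx]. rewrite upd_eq, upd_neq in Hx by auto. destruct Hx as [-> Hx]; auto. }
    destruct (IH (w :: L) _ cv ltac:(unfold vs'; congruence) HK2 Hcvv) as [L3 HI].
    exists (w :: cv :: mv :: L3).
    set (Inner := fun env : nat -> M => exists ns, length ns = length vs' /\ Forall (isNat mm) ns /\
          Code ns (env cv) /\ K (upd (envOf env vs' ns) u (envOf env vs' ns w))) in HI.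
    set (P := fun env : nat -> M => isNat mm (env w) /\ Pir (env cv) (env w) (env mv) /\ Inner env).
    assert (HP : Def (w :: cv :: mv :: L3) P).
    { unfold P. apply Def_and. apply DP_nat; inL. apply Def_and. apply DP_Pir; inL.
      apply (Def_weak L3); auto. intros v Hv; simpl; auto. }
    assert (HR : Def (w :: cv :: mv :: L3) (fun env => exists c, P (upd env cv c))).
    { apply (Def_ex' (w :: cv :: mv :: L3) (w :: cv :: mv :: L3) cv P); auto. intro; tauto. }
    apply (Def_ex' _ _ w _ _ HR). { intros; auto. }
    assert (Key : forall env a c ns, length ns = length vs' ->
      (K (upd (envOf (upd (upd env w a) cv c) vs' ns) u (envOf (upd (upd env w a) cv c) vs' ns w)) <->
       K (upd (envOf env vs' ns) u a))).
    { intros env a c ns Hl. rewrite envOf_out by auto. rewrite upd_neq, upd_eq by auto.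
      apply (Def_agree _ _ _ _ HK). intros z Hz. destruct (Nat.eq_dec z u).
      - subst; rewrite !upd_eq; auto.
      - rewrite !upd_neq by auto. apply envOf_agree; auto. intros _.
        rewrite !upd_neq; auto; intro; subst; tauto. }
    intro env. split.
    + intros [ns [Hl [Hf [Hc Hk]]]]. destruct ns as [|a ns']; try discriminate.
      destruct ns' as [|b ns2]; try discriminate.
      destruct Hc as [c [Hc Hp]]. inversion Hf; subst.
      exists a, c. unfold P. rewrite (upd_neq _ cv c w), upd_eq, upd_eq, (upd_neq _ cv c mv), (upd_neq _ w a mv) by auto.
      split; auto. split; auto. unfold Inner. exists (b :: ns2).
      rewrite upd_eq. split; [simpl in Hl |- *; congruence|]. split; auto. split; auto.
      apply Key; [simpl in Hl |- *; congruence|]. exact Hk.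
    + intros [a [c Hp]]. unfold P in Hp.
      rewrite (upd_neq _ cv c w), upd_eq, upd_eq, (upd_neq _ cv c mv), (upd_neq _ w a mv) in Hp by auto.
      destruct Hp as [Ha [Hp Hin]]. unfold Inner in Hin. destruct Hin as [ns [Hl [Hf [Hc Hk]]]].
      rewrite upd_eq in Hc. apply Key in Hk; auto.
      exists (a :: ns). split; [change (S (length ns) = S (length vs')); rewrite Hl; reflexivity|]. split; [constructor; auto|]. split; [|exact Hk].
      destruct ns as [|b ns2]; [discriminate|]. simpl. exists c; split; auto.
Qed.


Fixpoint fvl (f : form) : list nat :=
  match f with
  | FMem i j | FEq i j => [i; j]
  | FFalse => []
  | FImp a b | FAnd a b | FOr a b => fvl a ++ fvl b
  | FAll i a | FEx i a => fvl a
  end.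
Lemma fvl_spec f v : free f v -> In v (fvl f).
Proof.
  induction f; simpl; intros H.
  - destruct H as [->| ->]; auto.
  - destruct H as [->| ->]; auto.
  - destruct H.
  - rewrite in_app_iff; destruct H; auto.
  - rewrite in_app_iff; destruct H; auto.
  - rewrite in_app_iff; destruct H; auto.
  - destruct H; auto.
  - destruct H; auto.
Qed.

Lemma main qs : forall psi e vs, vs <> [] ->
  exists S, stt S /\ (forall x, mm x S -> isNat mm x) /\
   forall ns m, length ns = length vs -> Forall (fun n => isNat mm n /\ stt n) ns -> stt m -> Code ns m ->
     (mm m S <-> sat_prenex M qs psi (envOf e vs ns)).
Proof.
  destruct ex_omega as [W HW].
  induction qs as [|[q u] qs' IH]; intros psi e vs Hne.
  -
    set (mv := fresh (fvl psi ++ vs)).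
    assert (Hmv : ~ In mv (fvl psi ++ vs)) by apply fresh_notin.
    assert (HK : Def (fvl psi) (fun env => sat mm env psi)).
    { exists psi; split; [apply fvl_spec|tauto]. }
    destruct (DefBas vs _ _ mv Hne HK) as [L' HB].
    { intro; apply Hmv; apply in_or_app; auto. }
    destruct (sep _ _ e mv W HB) as [A HA].
    destruct (ax_stpart M A) as [B [HBs [HBn HBA]]].
    { intros x Hx; apply HA in Hx; apply HW; tauto. }
    exists B. split; auto. split; auto.
    intros ns m Hl Hf Hm Hc.
    assert (Hfn : Forall (isNat mm) ns) by (eapply Forall_impl; [|exact Hf]; simpl; tauto).
    assert (Hmn : isNat mm m) by (apply (Code_nat _ _ Hc Hfn)).
    rewrite HBA by auto. rewrite HA. rewrite upd_eq. simpl. split.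
    + intros [_ [ns' [Hl' [Hf' [Hc' Hk]]]]].
      assert (ns' = ns) by (apply (Code_inj _ _ m); auto; congruence). subst ns'.
      revert Hk. apply sat_agree. intros v Hv. apply envOf_agree; auto.
      intros _. rewrite upd_neq; auto. intro; subst; apply Hmv; apply in_or_app; left; apply fvl_spec; auto.
    + intro Hs. split; [apply HW; auto|]. exists ns. split; auto. split; auto. split; auto.
      revert Hs. apply sat_agree. intros v Hv. apply envOf_agree; auto.
      intros _. rewrite upd_neq; auto. intro; subst; apply Hmv; apply in_or_app; left; apply fvl_spec; auto.
  - destruct (IH psi e (u :: vs)) as [S' [HS's [HS'n HS']]]; [congruence|].
    assert (Hcode : forall ns m a m', Code ns m -> ns <> [] -> Pir m a m' -> Code (a :: ns) m').
    { intros ns m a m' Hc Hn Hp. destruct ns as [|b ns2]; [congruence|]. simpl. exists m; auto. }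
    destruct q.
    +
      assert (HD0 : Def [0;1] (fun env => isNat mm (env 0) /\ forall a, isNat mm a -> forall m',
                 Pir (env 0) a m' -> mm m' (env 1))) by (pose proof DP_nat; pose proof DP_Pir; defauto).
      destruct (sep _ _ (fun _ => S') 0 W HD0) as [T0 HT0].
      assert (HD1 : Def [1;2] (fun env => forall w, mm w (env 2) <-> (isNat mm w /\ forall a, isNat mm a ->
                 forall m', Pir w a m' -> mm m' (env 1)))) by (pose proof DP_nat; pose proof DP_Pir; defauto).
      destruct (transfer_ex _ _ 2 (fun _ => S') HD1) as [T [HTs HT]].
      { prm. }
      { exists T0. intro w. rewrite HT0. unfold upd; simpl. rewrite HW. tauto. }
      usimpl HT.
      exists T. split; auto. split; [intros x Hx; apply HT in Hx; tauto|].
      intros ns m Hl Hf Hm Hc.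
      assert (Hfn : Forall (isNat mm) ns) by (eapply Forall_impl; [|exact Hf]; simpl; tauto).
      assert (Hmn : isNat mm m) by (apply (Code_nat _ _ Hc Hfn)).
      assert (Hns : ns <> []) by (intro; subst; destruct Hc).
      rewrite HT. simpl. split.
      * intros [_ Hall] a Ha Has.
        destruct (Pir_total m a Hmn Ha) as [m0 Hm0].
        assert (HD : Def [0;1;2] (fun env => Pir (env 0) (env 1) (env 2))) by (pose proof DP_Pir; defauto).
        destruct (transfer_ex _ _ 2 (upd (upd (fun _ => m) 0 m) 1 a) HD) as [m' [Hm's Hm']].
        { prm. } { exists m0. unfold upd; simpl. auto. }
        usimpl Hm'.
        assert (Hm'S : mm m' S') by (apply (Hall a Ha m' Hm')).
        apply (HS' (a :: ns) m'); auto.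
        { simpl; congruence. }
        { apply (Hcode ns m); auto. }
      * intros Hs. split; auto.
        assert (HD : Def [0;1;2] (fun env => isNat mm (env 1) -> forall m', Pir (env 0) (env 1) m' -> mm m' (env 2)))
          by (pose proof DP_nat; pose proof DP_Pir; defauto).
        intros a.
        pose proof (transfer_all _ _ 1 (upd (fun _ => S') 0 m) HD) as Ht. usimpl Ht. apply Ht; clear Ht.
        { prm. }
        intros b Hbs Hbn.
        assert (HD' : Def [0;1;2;3] (fun env => Pir (env 0) (env 1) (env 2) -> mm (env 2) (env 3)))
          by (pose proof DP_Pir; defauto).
        intros m'.
        pose proof (transfer_all _ _ 2 (upd (upd (fun _ => S') 0 m) 1 b) HD') as Ht. usimpl Ht. apply Ht; clear Ht.
        { prm. }
        intros m'' Hm''s Hp.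
        apply (HS' (b :: ns) m''); auto.
        { simpl; congruence. }
        { apply (Hcode ns m); auto. }
        exact (Hs b Hbn Hbs).
    +
      assert (HD0 : Def [0;1] (fun env => isNat mm (env 0) /\ exists a, isNat mm a /\ exists m',
                 Pir (env 0) a m' /\ mm m' (env 1))) by (pose proof DP_nat; pose proof DP_Pir; defauto).
      destruct (sep _ _ (fun _ => S') 0 W HD0) as [T0 HT0].
      assert (HD1 : Def [1;2] (fun env => forall w, mm w (env 2) <-> (isNat mm w /\ exists a, isNat mm a /\
                 exists m', Pir w a m' /\ mm m' (env 1)))) by (pose proof DP_nat; pose proof DP_Pir; defauto).
      destruct (transfer_ex _ _ 2 (fun _ => S') HD1) as [T [HTs HT]].
      { prm. }
      { exists T0. intro w. rewrite HT0. unfold upd; simpl. rewrite HW. tauto. }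
      usimpl HT.
      exists T. split; auto. split; [intros x Hx; apply HT in Hx; tauto|].
      intros ns m Hl Hf Hm Hc.
      assert (Hfn : Forall (isNat mm) ns) by (eapply Forall_impl; [|exact Hf]; simpl; tauto).
      assert (Hmn : isNat mm m) by (apply (Code_nat _ _ Hc Hfn)).
      assert (Hns : ns <> []) by (intro; subst; destruct Hc).
      rewrite HT. simpl. split.
      * intros [_ Hex].
        assert (HD : Def [0;1;2] (fun env => isNat mm (env 1) /\ exists m', Pir (env 0) (env 1) m' /\ mm m' (env 2)))
          by (pose proof DP_nat; pose proof DP_Pir; defauto).
        destruct (transfer_ex _ _ 1 (upd (fun _ => S') 0 m) HD) as [a [Has Ha]].
        { prm. }
        { destruct Hex as [a Ha]. exists a. unfold upd; simpl. auto. }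
        usimpl Ha. destruct Ha as [Ha Hex'].
        assert (HD' : Def [0;1;2;3] (fun env => Pir (env 0) (env 1) (env 2) /\ mm (env 2) (env 3)))
          by (pose proof DP_Pir; defauto).
        destruct (transfer_ex _ _ 2 (upd (upd (fun _ => S') 0 m) 1 a) HD') as [m' [Hm's Hm']].
        { prm. }
        { destruct Hex' as [m' Hm']. exists m'. unfold upd; simpl. auto. }
        usimpl Hm'. destruct Hm' as [Hp Hm'].
        exists a. split; auto. split; auto.
        apply (HS' (a :: ns) m'); auto.
        { simpl; congruence. }
        { apply (Hcode ns m); auto. }
      * intros [a [Ha [Has Hs]]]. split; auto. exists a. split; auto.
        destruct (Pir_total m a Hmn Ha) as [m0 Hm0].
        assert (HD : Def [0;1;2] (fun env => Pir (env 0) (env 1) (env 2))) by (pose proof DP_Pir; defauto).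
        destruct (transfer_ex _ _ 2 (upd (upd (fun _ => m) 0 m) 1 a) HD) as [m' [Hm's Hm']].
        { prm. } { exists m0. unfold upd; simpl. auto. }
        usimpl Hm'. exists m'. split; auto.
        apply (HS' (a :: ns) m'); auto.
        { simpl; congruence. }
        { apply (Hcode ns m); auto. }
Qed.

End Main.

Theorem proposition2p7 (M : SPOT) (qs : list (quant * nat)) (psi : form)
    (nv : nat) (e : nat -> M) :
  exists S : M, st M S /\
    forall n : M, st M n ->
      (mem M n S <-> (isNat (mem M) n /\ sat_prenex M qs psi (upd e nv n))).
Proof.
  destruct (main M qs psi e [nv]) as [S [HSs [HSn HS]]]; [congruence|].
  exists S. split; auto. intros n Hn. split.
  - intro H. pose proof (HSn n H) as Hnn. split; auto.
    apply (HS [n] n) in H; auto. simpl; auto.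
  - intros [Hnn Hs]. apply (HS [n] n); auto. simpl; auto.
Qed.
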